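(* Let $M\in\mathcal G$ and let $A\subseteq B\subseteq M$ be submodules. The following are equivalent: (a) $B$ is a strict subobject of $M$ and $A$ is a strict subobject of $B$; (b) $A$ is a strict subobject of $M$ and $B/A$ is a strict subobject of $M/A$; (c) $A$ and $B$ are both strict subobjects of $M$. (A quotient $B/A$ arising this way is called a strict subquotient of $M$.)
   Context: Let $\Lambda$ be a finite dimensional algebra over a field and $\mathrm{mod}\text-\Lambda$ the category of finitely generated right $\Lambda$-modules. Fix a torsion class $\mathcal G\subseteq\mathrm{mod}\text-\Lambda$, i.e. a class of modules closed under isomorphisms, extensions and quotients. For $B\in\mathcal G$, a subobject of $B$ is a submodule of $B$ that lies in $\mathcal G$. A subobject $A\subseteq B$ is a strict subobject if $A\cap B'\in\mathcal G$ for every subobject $B'$ of $B$. *)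

(* Defs.v *)
From HB Require Import structures.
From mathcomp Require Import all_boot all_order all_algebra all_field.
Set Implicit Arguments.
Unset Strict Implicit.
Unset Printing Implicit Defensive.
Import GRing.Theory.
Local Open Scope ring_scope.

(* Finitely generated right modules over a finite dimensional F-algebra L
   (L : falgType F), modelled concretely: a module is a finite dimensional
   F-space of row vectors 'rV[F]_d together with the right action
   v . x := v *m fact M x. *)

Section Defs.
Variables (F : fieldType) (L : falgType F).

Record fmod := FMod { fdim : nat; fact : L -> 'M[F]_fdim }.

Definition is_rmod (M : fmod) : Prop :=
  [/\ (forall (a : F) (x y : L), fact M (a *: x + y) = a *: fact M x + fact M y),
      fact M 1 = 1%:M &
      (forall x y : L, fact M (x * y) = fact M x *m fact M y)].

(* L-linear maps v |-> v *m f *)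
Definition is_hom (M N : fmod) (f : 'M[F]_(fdim M, fdim N)) : Prop :=
  forall x : L, fact M x *m f = f *m fact N x.

(* torsion class: a class of modules closed under isomorphisms, quotients
   (epimorphic images) and extensions (short exact sequences) *)
Definition torsion_class (G : fmod -> Prop) : Prop :=
  [/\ (forall M, G M -> is_rmod M),
      (forall (M N : fmod) (f : 'M[F]_(fdim M, fdim N)),
          is_rmod M -> is_rmod N -> is_hom f -> row_free f -> row_full f ->
          G M -> G N),
      (forall (M N : fmod) (f : 'M[F]_(fdim M, fdim N)),
          is_rmod M -> is_rmod N -> is_hom f -> row_full f -> G M -> G N) &
      (forall (A M C : fmod) (f : 'M[F]_(fdim A, fdim M)) (g : 'M[F]_(fdim M, fdim C)),
          is_rmod A -> is_rmod M -> is_rmod C -> is_hom f -> is_hom g ->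
          row_free f -> row_full g -> (f == kermx g)%MS ->
          G A -> G C -> G M)].

(* a submodule of M, given by (the row space of) a matrix U *)
Definition submodule (M : fmod) m (U : 'M[F]_(m, fdim M)) : Prop :=
  forall x : L, (U *m fact M x <= U)%MS.

Arguments submodule M {m} U.

(* coordinates on the row space of U (as in mxrepresentation.v) *)
Definition val_sub n (U : 'M[F]_n) m (W : 'M[F]_(m, \rank U)) : 'M[F]_(m, n) :=
  W *m row_base U.
Definition in_sub n (U : 'M[F]_n) m (W : 'M[F]_(m, n)) : 'M[F]_(m, \rank U) :=
  W *m (invmx (row_ebase U) *m pid_mx (\rank U)).

(* coordinates on the quotient by the row space of U (as in mxrepresentation.v) *)
Definition val_fact n (U : 'M[F]_n) m (W : 'M[F]_(m, \rank (cokermx U))) : 'M[F]_(m, n) :=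
  W *m (row_base (cokermx U) *m row_ebase U).
Definition in_fact n (U : 'M[F]_n) m (W : 'M[F]_(m, n)) : 'M[F]_(m, \rank (cokermx U)) :=
  W *m col_base (cokermx U).

Arguments val_sub {n} U {m} W.
Arguments in_sub {n} U {m} W.
Arguments val_fact {n} U {m} W.
Arguments in_fact {n} U {m} W.

Definition sub_mod (M : fmod) m (U : 'M[F]_(m, fdim M)) : fmod :=
  @FMod (\rank <<U>>%MS)
        (fun x => in_sub <<U>>%MS (val_sub <<U>>%MS 1%:M *m fact M x)).

Definition fact_mod (M : fmod) m (U : 'M[F]_(m, fdim M)) : fmod :=
  @FMod (\rank (cokermx <<U>>%MS))
        (fun x => in_fact <<U>>%MS (val_fact <<U>>%MS 1%:M *m fact M x)).

Arguments sub_mod M {m} U.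
Arguments fact_mod M {m} U.

Definition subobj (G : fmod -> Prop) (X : fmod) m (U : 'M[F]_(m, fdim X)) : Prop :=
  submodule X U /\ G (sub_mod X U).

Arguments subobj G X {m} U.

Definition strict_subobj (G : fmod -> Prop) (X : fmod) m (A : 'M[F]_(m, fdim X)) : Prop :=
  subobj G X A /\
  forall k (B' : 'M[F]_(k, fdim X)), subobj G X B' -> G (sub_mod X (A :&: B')%MS).

Arguments strict_subobj G X {m} A.

End Defs.

Arguments submodule {F L} M {m} U.
Arguments sub_mod {F L} M {m} U.
Arguments fact_mod {F L} M {m} U.
Arguments subobj {F L} G X {m} U.
Arguments strict_subobj {F L} G X {m} A.

(* Main.v *)
Require Import Defs.
From HB Require Import structures.
From mathcomp Require Import all_boot all_order all_algebra all_field.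
From mathcomp Require Import mxrepresentation.
Set Implicit Arguments.
Unset Strict Implicit.
Unset Printing Implicit Defensive.
Import GRing.Theory.
Local Open Scope ring_scope.

Section Gen.
Variables (F : fieldType) (L : falgType F).
Implicit Types (M N : fmod L).
Local Notation vsub U W := (@val_sub _ _ U%MS _ W).
Local Notation vfact U W := (@val_fact _ _ U%MS _ W).

Lemma submod_gen M m (U : 'M[F]_(m, fdim M)) x k (Z : 'M_(k, fdim M)) :
  submodule M U -> (Z <= <<U>>)%MS -> (Z *m fact M x <= <<U>>)%MS.
Proof.
move=> HU sZ; rewrite genmxE; apply: submx_trans (HU x).
by apply: submxMr; move: sZ; rewrite genmxE.
Qed.

Lemma valJ M m (U : 'M[F]_(m, fdim M)) k (Y : 'M_(k, fdim (sub_mod M U))) x :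
  submodule M U ->
  vsub <<U>> (Y *m fact (sub_mod M U) x) = vsub <<U>> Y *m fact M x.
Proof.
move=> HU; rewrite /= /val_sub -mulmxA -[RHS]mulmxA; congr (_ *m _).
have E := @in_submodK F _ <<U>>%MS _ (vsub <<U>> 1%:M *m fact M x).
rewrite /val_submod /= in E; rewrite [LHS]E; first by rewrite /val_sub mul1mx.
by apply: submod_gen => //; exact: val_submodP.
Qed.

Lemma inJ M m (U : 'M[F]_(m, fdim M)) k (Z : 'M_(k, fdim M)) x :
  submodule M U ->
  in_fact <<U>>%MS (Z *m fact M x) = in_fact <<U>>%MS Z *m fact (fact_mod M U) x.
Proof.
move=> HU; have E := @add_sub_fact_mod F _ <<U>>%MS _ Z.
rewrite -{1}E /in_fact !mulmxDl.
have H0 : val_submod (in_submod <<U>>%MS Z) *m fact M x *m col_base (cokermx <<U>>%MS) = 0.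
  apply/eqP; have := @in_factmod_eq0 F _ <<U>>%MS _ (val_submod (in_submod <<U>>%MS Z) *m fact M x).
  rewrite /in_factmod /= => ->.
  by apply: submod_gen => //; exact: val_submodP.
rewrite H0 add0r /= /val_factmod /in_factmod /val_fact /= !mulmxA.
by rewrite mulmx1.
Qed.

Definition ishomto M N (e : 'M[F]_(fdim N, fdim M)) :=
  forall x, fact N x *m e = e *m fact M x.
Arguments ishomto : clear implicits.

Lemma emb_hom M m (U : 'M[F]_(m, fdim M)) :
  submodule M U -> ishomto M (sub_mod M U) (row_base <<U>>%MS).
Proof.
move=> HU x; have := valJ 1%:M x HU; rewrite /val_sub !mul1mx => <-.
by rewrite ?mulmxA ?mulmx1.
Qed.

Lemma rmod_sub M m (U : 'M[F]_(m, fdim M)) :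
  is_rmod M -> submodule M U -> is_rmod (sub_mod M U).
Proof.
case=> Hl H1 HM HU; split.
- by move=> a x y /=; rewrite Hl /in_sub mulmxDr mulmxDl -scalemxAr -scalemxAl.
- rewrite /= H1 mulmx1; exact: (@val_submodK F _ <<U>>%MS).
- move=> x y; apply: (row_free_inj (row_base_free <<U>>%MS)).
  rewrite /= (emb_hom HU) -mulmxA (emb_hom HU) mulmxA (emb_hom HU) HM mulmxA //.
Qed.

Lemma rmod_fact M m (U : 'M[F]_(m, fdim M)) :
  is_rmod M -> submodule M U -> is_rmod (fact_mod M U).
Proof.
case=> Hl H1 HM HU; split => /=.
- by move=> a x y /=; rewrite Hl /in_fact mulmxDr mulmxDl -scalemxAr -scalemxAl.
- rewrite H1 mulmx1; exact: (@val_factmodK F _ <<U>>%MS).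
- move=> x y; by rewrite HM mulmxA inJ.
Qed.

End Gen.
Arguments ishomto {F L} M N e.

Section Tors.
Variables (F : fieldType) (L : falgType F) (G : fmod L -> Prop).
Hypothesis HG : torsion_class G.
Implicit Types (M N : fmod L).
Local Notation vsub U W := (@val_sub _ _ U%MS _ W).
Local Notation vfact U W := (@val_fact _ _ U%MS _ W).

Lemma rank_free_mul m n p (f : 'M[F]_(m, n)) (e : 'M_(n, p)) :
  row_free (f *m e) -> row_free f.
Proof.
move=> Hf; apply/eqP/anti_leq; rewrite rank_leq_row /=.
by rewrite -{1}(eqP Hf) mxrankM_maxl.
Qed.

Lemma iso_emb M N1 N2 (e1 : 'M[F]_(fdim N1, fdim M)) (e2 : 'M[F]_(fdim N2, fdim M)) :
  is_rmod N1 -> is_rmod N2 -> row_free e1 -> row_free e2 ->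
  ishomto M N1 e1 -> ishomto M N2 e2 -> (e1 == e2)%MS -> G N1 -> G N2.
Proof.
move=> R1 R2 f1 f2 h1 h2 E12 G1.
case: HG => _ Hiso _ _.
pose f := e1 *m pinvmx e2.
have fe : f *m e2 = e1 by rewrite mulmxKpV //; case/andP: E12.
apply: (Hiso N1 N2 f) => //.
- move=> x; apply: (row_free_inj f2).
  by rewrite -mulmxA fe h1 -mulmxA h2 mulmxA fe.
- by apply: (rank_free_mul (e := e2)); rewrite fe.
- have rf : row_free f by apply: (rank_free_mul (e := e2)); rewrite fe.
  rewrite /row_full (eqP rf) -(eqP f1) -(eqP f2).
  by apply/eqP; apply: eqmx_rank.
Qed.

Lemma quot_emb M m (A : 'M[F]_(m, fdim M)) N1 N2 (e1 : 'M[F]_(fdim N1, fdim M))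
  (e2 : 'M[F]_(fdim N2, fdim (fact_mod M A))) :
  submodule M A -> is_rmod N1 -> is_rmod N2 -> row_free e2 ->
  ishomto M N1 e1 -> ishomto (fact_mod M A) N2 e2 -> (in_fact <<A>>%MS e1 == e2)%MS ->
  G N1 -> G N2.
Proof.
move=> HA R1 R2 f2 h1 h2 E12 G1.
case: HG => _ _ Hq _.
pose f := in_fact <<A>>%MS e1 *m pinvmx e2.
have fe : f *m e2 = in_fact <<A>>%MS e1 by rewrite mulmxKpV //; case/andP: E12.
apply: (Hq N1 N2 f) => //.
- move=> x; apply: (row_free_inj f2).
  rewrite /= -mulmxA fe.
  have -> : fact N1 x *m in_fact <<A>>%MS e1 = in_fact <<A>>%MS (fact N1 x *m e1).
    by rewrite /in_fact mulmxA.
  by rewrite h1 inJ // -[RHS]mulmxA h2 [RHS]mulmxA fe.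
- rewrite /row_full; apply/eqP/anti_leq; rewrite rank_leq_col /=.
  apply: leq_trans (mxrankM_maxl f e2).
  by rewrite fe (eqmx_rank E12) (eqP f2).
Qed.

Lemma ext_emb M m (A : 'M[F]_(m, fdim M)) N K C (e : 'M[F]_(fdim N, fdim M))
  (eK : 'M[F]_(fdim K, fdim M)) (eC : 'M[F]_(fdim C, fdim (fact_mod M A))) :
  is_rmod M -> submodule M A -> is_rmod N -> is_rmod K -> is_rmod C ->
  row_free e -> row_free eK -> row_free eC ->
  ishomto M N e -> ishomto M K eK -> ishomto (fact_mod M A) C eC ->
  (eK == e :&: A)%MS -> (eC == in_fact <<A>>%MS e)%MS ->
  G K -> G C -> G N.
Proof.
move=> RM HA RN RK RC fe0 fK fC he hK hC EK EC GK GC.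
case: HG => _ _ _ Hext.
pose g := in_fact <<A>>%MS e *m pinvmx eC.
have ge : g *m eC = in_fact <<A>>%MS e by rewrite mulmxKpV //; case/andP: EC.
have sKe : (eK <= e)%MS by case/andP: EK => H _; apply: submx_trans H (capmxSl _ _).
pose f := eK *m pinvmx e.
have fe : f *m e = eK by rewrite mulmxKpV.
apply: (Hext K N C f g) => //.
- move=> x; apply: (row_free_inj fe0).
  by rewrite -mulmxA fe hK -mulmxA he mulmxA fe.
- move=> x; apply: (row_free_inj fC); rewrite /= -mulmxA ge.
  have -> : fact N x *m in_fact <<A>>%MS e = in_fact <<A>>%MS (fact N x *m e).
    by rewrite /in_fact mulmxA.
  by rewrite he inJ // -[RHS]mulmxA hC [RHS]mulmxA ge.
- by apply: (rank_free_mul (e := e)); rewrite fe.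
- rewrite /row_full; apply/eqP/anti_leq; rewrite rank_leq_col /=.
  apply: leq_trans (mxrankM_maxl g eC).
  by rewrite ge -(eqmx_rank EC) (eqP fC).
- apply/rV_eqP => u.
  rewrite sub_kermx -(mulmx_free_eq0 _ fC) -mulmxA ge.
  have -> : u *m in_fact <<A>>%MS e = in_factmod <<A>>%MS (u *m e).
    by rewrite /in_fact /in_factmod /= mulmxA.
  rewrite in_factmod_eq0 genmxE -(submxMfree _ _ fe0) fe.
  rewrite (eqmxP EK) sub_capmx submxMl.
  done.
Qed.

Lemma emb_eq n m (U : 'M[F]_(m, n)) : (row_base <<U>>%MS :=: U)%MS.
Proof. exact: eqmx_trans (eq_row_base _) (genmxE _). Qed.

Lemma submod_eqmx M m1 m2 (U : 'M[F]_(m1, fdim M)) (V : 'M[F]_(m2, fdim M)) :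
  (U :=: V)%MS -> submodule M U -> submodule M V.
Proof. by move=> E HU x; rewrite -(eqmxMr _ E) -E. Qed.

Lemma sub_mod_eq M m1 m2 (U : 'M[F]_(m1, fdim M)) (V : 'M[F]_(m2, fdim M)) :
  (U == V)%MS -> sub_mod M U = sub_mod M V.
Proof. by move/genmxP => E; rewrite /sub_mod E. Qed.

Lemma submod_cap M m1 m2 (U : 'M[F]_(m1, fdim M)) (V : 'M[F]_(m2, fdim M)) :
  submodule M U -> submodule M V -> submodule M (U :&: V)%MS.
Proof.
move=> HU HV x; rewrite sub_capmx; apply/andP; split.
  by apply: submx_trans (HU x); apply: submxMr; apply: capmxSl.
by apply: submx_trans (HV x); apply: submxMr; apply: capmxSr.
Qed.

Lemma submod_fact M m (A : 'M[F]_(m, fdim M)) k (X : 'M[F]_(k, fdim M)) :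
  submodule M A -> submodule M X -> submodule (fact_mod M A) (in_fact <<A>>%MS X).
Proof.
move=> HA HX x; rewrite -inJ //; rewrite /in_fact; exact: submxMr.
Qed.

Lemma submod_val M m (B : 'M[F]_(m, fdim M)) k (U : 'M[F]_(k, fdim (sub_mod M B))) :
  submodule M B -> submodule (sub_mod M B) U -> submodule M (vsub <<B>> U).
Proof.
move=> HB HU x; rewrite -valJ //; rewrite /val_sub; exact: submxMr.
Qed.

Lemma in_subK n (U : 'M[F]_n) k (Z : 'M[F]_(k, n)) :
  (Z <= U)%MS -> vsub U (in_sub U Z) = Z.
Proof. exact: (@in_submodK F n U k Z). Qed.

Lemma submod_in M m (B : 'M[F]_(m, fdim M)) k (Z : 'M[F]_(k, fdim M)) :
  submodule M B -> submodule M Z -> (Z <= B)%MS ->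
  submodule (sub_mod M B) (in_sub <<B>>%MS Z).
Proof.
move=> HB HZ sZB x.
have K : vsub <<B>> (in_sub <<B>>%MS Z) = Z.
  by apply: in_subK; rewrite genmxE.
rewrite -(@val_submodS F _ <<B>>%MS).
have -> : val_submod (in_sub <<B>>%MS Z *m fact (sub_mod M B) x) = vsub <<B>> (in_sub <<B>>%MS Z *m fact (sub_mod M B) x) by [].
have -> : val_submod (in_sub <<B>>%MS Z) = vsub <<B>> (in_sub <<B>>%MS Z) by [].
by rewrite valJ // K.
Qed.

Lemma quotA M m (A : 'M[F]_(m, fdim M)) k (X : 'M[F]_(k, fdim M)) :
  is_rmod M -> submodule M A -> submodule M X -> G (sub_mod M X) ->
  G (sub_mod (fact_mod M A) (in_fact <<A>>%MS X)).
Proof.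
move=> RM HA HX GX.
apply: (quot_emb (N1 := sub_mod M X) (N2 := sub_mod (fact_mod M A) (in_fact <<A>>%MS X)) (e1 := row_base <<X>>%MS) (e2 := row_base <<in_fact <<A>>%MS X>>%MS) HA) => //.
- exact: rmod_sub.
- by apply: rmod_sub; [exact: rmod_fact | exact: submod_fact].
- exact: row_base_free.
- exact: emb_hom.
- by apply: emb_hom; exact: submod_fact.
- apply/eqmxP; exact: eqmx_trans (eqmxMr _ (emb_eq X)) (eqmx_sym (emb_eq _)).
Qed.

Lemma extA M m (A : 'M[F]_(m, fdim M)) k (X : 'M[F]_(k, fdim M)) :
  is_rmod M -> submodule M A -> submodule M X -> G (sub_mod M (X :&: A)%MS) ->
  G (sub_mod (fact_mod M A) (in_fact <<A>>%MS X)) -> G (sub_mod M X).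
Proof.
move=> RM HA HX GK GC.
have HXA := submod_cap HX HA.
have HqX := submod_fact HA HX.
apply: (ext_emb (N := sub_mod M X) (K := sub_mod M (X :&: A)%MS) (C := sub_mod (fact_mod M A) (in_fact <<A>>%MS X)) (e := row_base <<X>>%MS) (eK := row_base <<(X :&: A)%MS>>%MS)
   (eC := row_base <<in_fact <<A>>%MS X>>%MS) RM HA) => //.
- exact: rmod_sub.
- exact: rmod_sub.
- by apply: rmod_sub; [exact: rmod_fact|].
- exact: row_base_free.
- exact: row_base_free.
- exact: row_base_free.
- exact: emb_hom.
- exact: emb_hom.
- exact: emb_hom.
- apply/eqmxP; apply: eqmx_trans (emb_eq _) _.
  exact: cap_eqmx (eqmx_sym (emb_eq _)) (eqmx_refl _).
- apply/eqmxP; apply: eqmx_trans (emb_eq _) _.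
  rewrite /in_fact; apply: eqmxMr; exact: eqmx_sym (emb_eq _).
Qed.

Lemma subsub M m (B : 'M[F]_(m, fdim M)) k (U : 'M[F]_(k, fdim (sub_mod M B))) :
  is_rmod M -> submodule M B -> submodule (sub_mod M B) U ->
  G (sub_mod (sub_mod M B) U) <-> G (sub_mod M (vsub <<B>> U)).
Proof.
move=> RM HB HU.
have RS := rmod_sub RM HB.
have HV := submod_val HB HU.
have R1 := rmod_sub RS HU.
have R2 := rmod_sub RM HV.
have f1 : row_free (row_base <<U>>%MS *m row_base <<B>>%MS).
  by rewrite /row_free mxrankMfree ?row_base_free //; exact: row_base_free.
have h1 : ishomto M (sub_mod (sub_mod M B) U) (row_base <<U>>%MS *m row_base <<B>>%MS).
  move=> x; rewrite mulmxA (emb_hom HU) -mulmxA (emb_hom HB) mulmxA //.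
have E : (row_base <<U>>%MS *m row_base <<B>>%MS :=: row_base <<vsub <<B>> U>>%MS)%MS.
  apply: eqmx_trans (eqmxMr _ (emb_eq _)) _; exact: eqmx_sym (emb_eq _).
split => H.
  apply: (iso_emb (N1 := sub_mod (sub_mod M B) U) (N2 := sub_mod M (vsub <<B>> U)) (e1 := row_base <<U>>%MS *m row_base <<B>>%MS)
                  (e2 := row_base <<vsub <<B>> U>>%MS)) => //.
  - exact: row_base_free.
  - exact: emb_hom.
  - exact/eqmxP.
apply: (iso_emb (N2 := sub_mod (sub_mod M B) U) (N1 := sub_mod M (vsub <<B>> U)) (e2 := row_base <<U>>%MS *m row_base <<B>>%MS)
                (e1 := row_base <<vsub <<B>> U>>%MS)) => //.
- exact: row_base_free.
- exact: emb_hom.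
- apply/eqmxP; exact: eqmx_sym.
Qed.

End Tors.

Section Caps.
Variables (F : fieldType) (L : falgType F).
Implicit Types (M N : fmod L).
Local Notation vsub U W := (@val_sub _ _ U%MS _ W).
Local Notation vfact U W := (@val_fact _ _ U%MS _ W).

Lemma qcap n (A : 'M[F]_n) m1 m2 (X : 'M_(m1, n)) (Y : 'M_(m2, n)) :
  (A <= X)%MS -> (in_fact A (X :&: Y) == in_fact A X :&: in_fact A Y)%MS.
Proof.
move=> AX; apply/andP; split; first exact: capmxMr.
apply/rV_subP => u; rewrite sub_capmx => /andP [/submxP [a ->] /submxP [b Eb]].
have Ex : in_factmod A (a *m X - b *m Y) = 0.
  by rewrite /in_factmod /= mulmxBl -!mulmxA Eb subrr.
have sxA : (a *m X - b *m Y <= A)%MS by rewrite -in_factmod_eq0 Ex.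
have sx : (a *m X <= A + Y :&: X)%MS.
  rewrite (matrix_modl Y AX) sub_capmx submxMl andbT.
  rewrite -(subrK (b *m Y) (a *m X)); apply: addmx_sub_adds => //; exact: submxMl.
have -> : a *m in_fact A X = in_factmod A (a *m X) by rewrite /in_factmod /= mulmxA.
apply: submx_trans (submxMr (col_base (cokermx A)) sx) _.
change (in_factmod A (A + Y :&: X)%MS <= in_factmod A (X :&: Y))%MS.
by rewrite in_factmod_addsK; apply: submxMr; rewrite capmxC.
Qed.

Lemma scap n (U : 'M[F]_n) m1 m2 (P : 'M_(m1, \rank U)) (Q : 'M_(m2, \rank U)) :
  (vsub U (P :&: Q) == vsub U P :&: vsub U Q)%MS.
Proof.
apply/andP; split; first exact: capmxMr.
apply/rV_subP => u; rewrite sub_capmx => /andP [/submxP [a ->] /submxP [b Eb]].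
have E : a *m P = b *m Q.
  by apply: (row_free_inj (row_base_free U)); rewrite /= -!mulmxA.
rewrite /val_sub mulmxA; apply: submxMr.
by rewrite sub_capmx submxMl E submxMl.
Qed.

Lemma liftq M m (A : 'M[F]_(m, fdim M)) k (C : 'M[F]_(k, fdim (fact_mod M A))) :
  submodule M A -> submodule (fact_mod M A) C ->
  [/\ submodule M (vfact <<A>> C + A)%MS,
      (in_fact <<A>>%MS (vfact <<A>> C + A)%MS == C)%MS &
      (A <= vfact <<A>> C + A)%MS].
Proof.
move=> HA HC; split; last exact: addsmxSr.
- move=> x; rewrite addsmxMr addsmx_sub; apply/andP; split; last first.
    exact: submx_trans (HA x) (addsmxSr _ _).
  have E := @add_sub_fact_mod F _ <<A>>%MS _ (vfact <<A>> C *m fact M x).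
  rewrite -E addsmxC; apply: addmx_sub_adds.
    by have := @val_submodP F _ <<A>>%MS _ (in_submod <<A>>%MS (vfact <<A>> C *m fact M x)); rewrite genmxE.
  have -> : in_factmod <<A>>%MS (vfact <<A>> C *m fact M x) = C *m fact (fact_mod M A) x.
    change (in_fact <<A>>%MS (vfact <<A>> C *m fact M x) = C *m fact (fact_mod M A) x).
    rewrite inJ //; congr (_ *m _); exact: (@val_factmodK F _ <<A>>%MS _ C).
  rewrite /val_factmod /val_fact /=; apply: submxMr; exact: HC.
- apply/eqmxP; rewrite addsmxC.
  apply: eqmx_trans (eqmxMr _ (adds_eqmx (eqmx_sym (genmxE A)) (eqmx_refl _))) _.
  apply: eqmx_trans (in_factmod_addsK _ _) _.
  by rewrite (@val_factmodK F _ <<A>>%MS _ C).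
Qed.

End Caps.

Local Notation vsub U W := (@val_sub _ _ U%MS _ W).
Local Notation vfact U W := (@val_fact _ _ U%MS _ W).

Unset Implicit Arguments.

Theorem mainTheorem5 (F : fieldType) (L : falgType F) (G : fmod L -> Prop)
  (HG : torsion_class G) (M : fmod L) (HM : is_rmod M) (GM : G M)
  (A B : 'M[F]_(fdim M))
  (HA : submodule M A) (HB : submodule M B) (AB : (A <= B)%MS) :
  let a := strict_subobj G M B /\ strict_subobj G (sub_mod M B) (in_sub <<B>>%MS A ) in
  let b := strict_subobj G M A /\ strict_subobj G (fact_mod M A) (in_fact <<A>>%MS B ) in
  let c := strict_subobj G M A /\ strict_subobj G M B in
  (a <-> b) /\ (b <-> c).
Proof.
move=> a b c.
have sA : (A <= <<B>>)%MS by rewrite genmxE.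
have vsA : vsub <<B>> (in_sub <<B>>%MS A) = A := in_subK sA.
have HsA : submodule (sub_mod M B) (in_sub <<B>>%MS A) := submod_in HB HA AB.
have HqB : submodule (fact_mod M A) (in_fact <<A>>%MS B) := submod_fact HA HB.
have AC : a -> c.
  case=> [[[HB1 GB] stB] [[_ GsA] stA]].
  have GA : G (sub_mod M A).
    by have := (subsub HG HM HB HsA).1 GsA; rewrite vsA.
  split; last by split.
  split; first by split.
  move=> k B' [HB' GB'].
  have GBB := stB k B' (conj HB' GB').
  have HBB := submod_cap HB HB'.
  have HU := submod_in HB HBB (capmxSl B B').
  have vU : vsub <<B>> (in_sub <<B>>%MS (B :&: B')%MS) = (B :&: B')%MS.
    by apply: in_subK; rewrite genmxE capmxSl.
  have GU : G (sub_mod (sub_mod M B) (in_sub <<B>>%MS (B :&: B')%MS)).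
    by apply/(subsub HG HM HB HU); rewrite vU.
  have := stA _ _ (conj HU GU).
  move/(subsub HG HM HB (submod_cap HsA HU)).
  have E : (vsub <<B>> (in_sub <<B>>%MS A :&: in_sub <<B>>%MS (B :&: B')%MS) == A :&: B')%MS.
    have E1 := scap (in_sub <<B>>%MS A) (in_sub <<B>>%MS (B :&: B')%MS).
    rewrite vsA vU capmxA in E1.
    apply/eqmxP; apply: eqmx_trans (eqmxP E1) _.
    exact: cap_eqmx (capmx_idPl AB) (eqmx_refl _).
  by rewrite (sub_mod_eq E).
have CA : c -> a.
  case=> [[[_ GA] stA] SB]; split; first exact: SB.
  split.
    split; first exact: HsA.
    by apply/(subsub HG HM HB HsA); rewrite vsA.
  move=> k U [HU GU].
  have HvU := submod_val HB HU.
  have GvU := (subsub HG HM HB HU).1 GU.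
  have := stA _ _ (conj HvU GvU).
  have E2 := scap (in_sub <<B>>%MS A) U; rewrite vsA in E2.
  rewrite -(sub_mod_eq E2) => H.
  exact/(subsub HG HM HB (submod_cap HsA HU)).
have BC : b -> c.
  case=> [SA [[_ GqB] stqB]]; split; first exact: SA.
  case: SA => [[_ GA] stA].
  have GB : G (sub_mod M B).
    apply: (extA HG HM HA HB) GqB.
    have E3 : (B :&: A == A)%MS by apply/eqmxP; apply/capmx_idPr.
    by rewrite (sub_mod_eq E3).
  split; first by split.
  move=> k B' [HB' GB'].
  have HBB := submod_cap HB HB'.
  apply: (extA HG HM HA HBB).
    have E4 : ((B :&: B') :&: A == A :&: B')%MS.
      rewrite capmxC capmxA; apply/eqmxP.
      exact: cap_eqmx (capmx_idPl AB) (eqmx_refl _).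
    by rewrite (sub_mod_eq E4); apply: stA; split.
  have := stqB _ _ (conj (submod_fact HA HB') (quotA HG HM HA HB' GB')).
  have sAB : (<<A>> <= B)%MS by rewrite genmxE.
  have E5 := qcap B' sAB.
  by rewrite (sub_mod_eq (M := fact_mod M A) E5).
have CB : c -> b.
  case=> [SA [[_ GB] stB]]; split; first exact: SA.
  case: SA => [[_ GA] stA].
  split.
    split; first exact: HqB.
    have H := quotA HG HM HA HB GB. exact H.
  move=> k C' [HC' GC'].
  have [HCm EC ACm] := liftq HA HC'.
  have GCm : G (sub_mod M (vfact <<A>> C' + A)%MS).
    apply: (extA HG HM HA HCm).
      have E3 : ((vfact <<A>> C' + A) :&: A == A)%MS by apply/eqmxP; apply/capmx_idPr.
      by rewrite (sub_mod_eq E3).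
    by rewrite (sub_mod_eq (M := fact_mod M A) EC).
  have GBC := stB _ _ (conj HCm GCm).
  have := quotA HG HM HA (submod_cap HB HCm) GBC.
  have sAB : (<<A>> <= B)%MS by rewrite genmxE.
  have E6 : (in_fact <<A>>%MS (B :&: (vfact <<A>> C' + A))%MS == in_fact <<A>>%MS B :&: C')%MS.
    apply/eqmxP; apply: eqmx_trans (eqmxP (qcap _ sAB)) _.
    exact: cap_eqmx (eqmx_refl _) (eqmxP EC).
  by rewrite (sub_mod_eq (M := fact_mod M A) E6).
split; split.
- by move=> /AC /CB.
- by move=> /BC /CA.
- exact: BC.
- exact: CB.
Qed.
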